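(* Let $X$ be a finite set, let $\mathcal{C}^{\ast}$ be a target clustering of $X$, and let $\gamma$ be any natural clustering error (with respect to $\mathcal{C}^{\ast}$). Then for every clustering $\mathcal{C}$ of $X$, $$\gamma(\mathcal{C},\mathcal{C}^{\ast}) \ge \delta(\mathcal{C},\mathcal{C}^{\ast}),$$ where $\delta(\mathcal{C},\mathcal{C}^{\ast}) = \mathrm{dist}(\mathcal{C}^{\ast},\mathcal{C}) + \mathrm{dist}(\mathcal{C},\mathcal{C}^{\ast})$.
   Context: A clustering of a finite set $X$ is a partition of $X$ into nonempty clusters. The target (ground-truth) clustering is $\mathcal{C}^{\ast}=\{C^{\ast}_1,\dots,C^{\ast}_k\}$. For clusterings $\mathcal{C},\mathcal{C}'$ of $X$ define $\mathrm{dist}(\mathcal{C},\mathcal{C}')=\sum_{A\in\mathcal{C}}\big(|\{B\in\mathcal{C}': B\cap A\neq\emptyset\}|-1\big)$. For a proposed clustering $\mathcal{C}$, $\delta_u=\mathrm{dist}(\mathcal{C}^{\ast},\mathcal{C})$ is its underclustering error, $\delta_o=\mathrm{dist}(\mathcal{C},\mathcal{C}^{\ast})$ its overclustering error, and $\delta(\mathcal{C},\mathcal{C}^{\ast})=\delta_u+\delta_o$. A natural clustering error is a function $\gamma$ assigning to each clustering $\mathcal{C}$ of $X$ a nonnegative integer $\gamma(\mathcal{C},\mathcal{C}^{\ast})$ such that for every clustering $\mathcal{C}$: (1) if some cluster $C_i\in\mathcal{C}$ contains points of $C^{\ast}_j$ and points of some other target cluster, then the clustering obtained by replacing $C_i$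 with the two clusters $C_i\cap C^{\ast}_j$ and $C_i\setminus C^{\ast}_j$ has strictly smaller $\gamma$; (2) if two distinct clusters of $\mathcal{C}$ both contain only points from the same target cluster, then the clustering obtained by replacing them with their union has strictly smaller $\gamma$. *)

(* Defs.v *)
From mathcomp Require Import all_boot.
Set Implicit Arguments. Unset Strict Implicit. Unset Printing Implicit Defensive.

Definition clustering (T : finType) (C : {set {set T}}) : bool :=
  partition C [set: T].

Definition cdist (T : finType) (C C' : {set {set T}}) : nat :=
  \sum_(A in C) (#|[set B in C' | B :&: A != set0]| - 1).

Definition delta (T : finType) (C Cstar : {set {set T}}) : nat :=
  cdist Cstar C + cdist C Cstar.

Definition split_cluster (T : finType) (C : {set {set T}}) (Ci Cj : {set T})
  : {set {set T}} :=
  (C :\ Ci) :|: [set Ci :&: Cj; Ci :\: Cj].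

Definition merge_clusters (T : finType) (C : {set {set T}}) (A B : {set T})
  : {set {set T}} :=
  (C :\ A :\ B) :|: [set A :|: B].

Definition natural_error (T : finType) (Cstar : {set {set T}})
  (gamma : {set {set T}} -> nat) : Prop :=
  forall C : {set {set T}}, clustering C ->
    (forall Ci Cj, Ci \in C -> Cj \in Cstar ->
       Ci :&: Cj != set0 ->
       (exists2 Ck, Ck \in Cstar & (Ck != Cj) && (Ci :&: Ck != set0)) ->
       gamma (split_cluster C Ci Cj) < gamma C)
    /\
    (forall A B, A \in C -> B \in C -> A != B ->
       (exists2 Cj, Cj \in Cstar & (A \subset Cj) && (B \subset Cj)) ->
       gamma (merge_clusters C A B) < gamma C).

(* Main.v *)
Require Import Defs.
From mathcomp Require Import all_boot zify.
Set Implicit Arguments. Unset Strict Implicit.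

Section S.
Variable T : finType.
Implicit Types (P C D : {set {set T}}) (A B : {set T}).

Definition goodP P := [/\ set0 \notin P, (forall x, exists2 A, A \in P & x \in A) &
  (forall A B x, A \in P -> B \in P -> x \in A -> x \in B -> A = B)].

Lemma partP P : clustering P <-> goodP P.
Proof.
rewrite /clustering /partition; split.
  case/and3P=> /eqP cov /trivIsetP tri n0; split=> //.
    move=> x; have : x \in cover P by rewrite cov inE.
    by case/bigcupP=> A AP xA; exists A.
  move=> A B x AP BP xA xB; apply/eqP; apply/negPn/negP=> neq.
  have := tri A B AP BP neq; rewrite -setI_eq0 => /eqP e.
  have : x \in A :&: B by rewrite inE xA xB.
  by rewrite e inE.
case=> n0 cov tri; apply/and3P; split=> //.
  apply/eqP/setP=> x; rewrite inE; case: (cov x)=> A AP xA.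
  by apply/bigcupP; exists A.
apply/trivIsetP=> A B AP BP neq; rewrite -setI_eq0; apply/eqP/setP=> x.
rewrite !inE; apply/negP=> /andP[xA xB]; by move/eqP: neq; apply; apply: tri xA xB.
Qed.

Definition f D A := #|[set B in D | B :&: A != set0]|.

Lemma f_sum D A : f D A = \sum_(B in D) (B :&: A != set0).
Proof. by rewrite /f -sum1_card big_mkcond [RHS]big_mkcond; apply: eq_bigr=> B _; rewrite inE; case: (B \in D); case: (_ != _). Qed.

Lemma fpos D A : clustering D -> A != set0 -> 0 < f D A.
Proof.
move=> /partP [_ cov _] /set0Pn [x xA]; case: (cov x)=> B BD xB.
rewrite card_gt0; apply/set0Pn; exists B; rewrite inE BD /=.
by apply/set0Pn; exists x; rewrite inE xA xB.
Qed.

Lemma cdist_f C D : clustering D -> set0 \notin C -> cdist C D + #|C| = \sum_(A in C) f D A.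
Proof.
move=> cD n0; rewrite /cdist -sum1_card -big_split /=; apply: eq_bigr=> A HAC.
have : 0 < f D A by apply: fpos => //; apply: contraNneq n0 => <-.
by move=> h; rewrite subnK.
Qed.

Lemma double C D : \sum_(A in C) f D A = \sum_(B in D) f C B.
Proof.
under eq_bigr do rewrite f_sum. rewrite exchange_big /=; apply: eq_bigr=> B _.
by rewrite f_sum; apply: eq_bigr=> A _; rewrite setIC.
Qed.

Lemma delta_f C D : clustering C -> clustering D ->
  delta C D + #|C| + #|D| = 2 * \sum_(A in C) f D A.
Proof.
move=> cC cD; have [n0C _ _] := (partP C).1 cC; have [n0D _ _] := (partP D).1 cD.
rewrite /delta; have := cdist_f cD n0C; have := cdist_f cC n0D; rewrite -double; lia.
Qed.
End S.

Lemma arith_split a b c d e g h k : a + (1 + c) + d = 2 * (e + k) ->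
  b + (1 + (1 + c)) + d = 2 * (g + (h + k)) -> e <= g + h -> a <= b + 1.
Proof. lia. Qed.

Section Steps.
Variable T : finType.
Implicit Types (P C D : {set {set T}}) (A B : {set T}).

Lemma split_ok C D Ci Cj Ck : clustering C -> clustering D ->
  Ci \in C -> Cj \in D -> Ck \in D -> Ck != Cj ->
  Ci :&: Cj != set0 -> Ci :&: Ck != set0 ->
  clustering (split_cluster C Ci Cj) /\ delta C D <= delta (split_cluster C Ci Cj) D + 1.
Proof.
move=> cC cD CiC CjD CkD nkj /set0Pn[x0 x0X] /set0Pn[y0 y0K].
have [n0C covC triC] := (partP C).1 cC; have [n0D covD triD] := (partP D).1 cD.
move: x0X y0K; rewrite !inE => /andP[x0i x0j] /andP[y0i y0k].
have y0nj : y0 \notin Cj.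
  by apply/negP=> y0j; move/eqP: nkj; apply; apply: triD y0k y0j.
set X := Ci :&: Cj; set Y := Ci :\: Cj.
have x0X : x0 \in X by rewrite inE x0i x0j.
have y0Y : y0 \in Y by rewrite inE y0i y0nj.
have XsCi : X \subset Ci by apply: subsetIl.
have YsCi : Y \subset Ci by apply: subsetDl.
have memC' Z : (Z \in split_cluster C Ci Cj) = [|| (Z != Ci) && (Z \in C), Z == X | Z == Y].
  by rewrite /split_cluster !inE orbA.
have XnY : X != Y.
  by apply/eqP=> e; move: x0X; rewrite e inE x0j.
have Xn : X \notin C :\ Ci.
  rewrite !inE; apply/negP=> /andP[ne XC]; move/eqP: ne; apply.
  by apply: triC XC CiC x0X (subsetP XsCi _ x0X).
have Yn : Y \notin C :\ Ci.
  rewrite !inE; apply/negP=> /andP[ne YC]; move/eqP: ne; apply.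
  by apply: triC YC CiC y0Y (subsetP YsCi _ y0Y).
have cC' : clustering (split_cluster C Ci Cj).
  apply/partP; split.
  - rewrite memC' negb_or; apply/andP; split.
      by apply/negP=> /andP[_ h]; rewrite h in n0C.
    by apply/negP=> /orP[] /eqP e; [move: x0X|move: y0Y]; rewrite -e inE.
  - move=> x; case: (covC x)=> A HAC xA.
    case: (eqVneq A Ci)=> [eA|nA].
      case xj: (x \in Cj).
        by exists X; rewrite ?memC' ?eqxx ?orbT // inE -eA xA xj.
      by exists Y; rewrite ?memC' ?eqxx ?orbT // inE -eA xA xj.
    by exists A; rewrite // memC' nA HAC.
  - move=> A B x; rewrite !memC'.
    have restX Z : (Z != Ci) && (Z \in C) -> x \in Z -> x \in Ci -> False.
      by case/andP=> /eqP nZ ZC xZ xCi; apply: nZ; apply: triC ZC CiC xZ xCi.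
    case/or3P=> [hA|/eqP->|/eqP->]; case/or3P=> [hB|/eqP->|/eqP->] xA xB.
    + by case/andP: hA=> _ HAC; case/andP: hB=> _ HBC; apply: triC HAC HBC xA xB.
    + by case: (restX _ hA xA (subsetP XsCi _ xB)).
    + by case: (restX _ hA xA (subsetP YsCi _ xB)).
    + by case: (restX _ hB xB (subsetP XsCi _ xA)).
    + by [].
    + by move: xA xB; rewrite /X /Y !inE; case: (x \in Cj); rewrite /= ?andbF => // _ [].
    + by case: (restX _ hB xB (subsetP YsCi _ xA)).
    + by move: xA xB; rewrite /X /Y !inE; case: (x \in Cj); rewrite /= ?andbF => // [].
    + by [].
split=> //.
have e' : split_cluster C Ci Cj = X |: (Y |: (C :\ Ci)).
  by apply/setP=> Z; rewrite memC' !inE orbC -orbA.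
have h1 := delta_f cC cD; have h2 := delta_f cC' cD.
rewrite e' in h2; rewrite e' in h2 *.
rewrite (big_setD1 Ci CiC) /= in h1; rewrite (cardsD1 Ci C) CiC in h1.
have XnY' : X \notin Y |: (C :\ Ci) by rewrite in_setU1 negb_or XnY.
rewrite !big_setU1 //= !cardsU1 XnY' Yn /= in h2.
have : f D Ci <= f D X + f D Y.
  rewrite /f; apply: leq_trans (leq_card_setU _ _).1.
  apply: subset_leq_card; apply/subsetP=> K; rewrite !inE => /andP[KD /set0Pn[z]].
  rewrite !inE KD /= => /andP[zK zi].
  case zj: (z \in Cj).
    by apply/orP; left; apply/set0Pn; exists z; rewrite !inE zK zi zj.
  by apply/orP; right; apply/set0Pn; exists z; rewrite !inE zK zi zj.
change (nat_of_bool true) with 1 in h1.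
move=> hf; move: h1 h2 hf.
move: (delta C D) (delta (X |: (Y |: C :\ Ci)) D) #|C :\ Ci| #|D| (f D Ci) (f D X) (f D Y) (\sum_(i in C :\ Ci) f D i) => a b c d e g h k.
exact: arith_split.
Qed.
End Steps.

Lemma arith_merge a b c d e g h k : a + (1 + (1 + c)) + d = 2 * (e + (g + k)) ->
  b + (1 + c) + d = 2 * (h + k) -> e <= 1 -> g <= 1 -> 0 < h -> a <= b + 1.
Proof. lia. Qed.

Section Steps2.
Variable T : finType.
Implicit Types (P C D : {set {set T}}) (A B : {set T}).

Lemma f_le1 D A Cj : clustering D -> Cj \in D -> A \subset Cj -> f D A <= 1.
Proof.
move=> /partP[_ _ triD] CjD sA; rewrite -(cards1 Cj); apply: subset_leq_card.
apply/subsetP=> K; rewrite !inE => /andP[KD /set0Pn[z]]; rewrite inE => /andP[zK zA].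
by apply/eqP; apply: triD KD CjD zK (subsetP sA _ zA).
Qed.

Lemma merge_ok C D A B Cj : clustering C -> clustering D ->
  A \in C -> B \in C -> A != B -> Cj \in D -> A \subset Cj -> B \subset Cj ->
  clustering (merge_clusters C A B) /\ delta C D <= delta (merge_clusters C A B) D + 1.
Proof.
move=> cC cD HAC HBC nAB CjD sA sB.
have [n0C covC triC] := (partP C).1 cC.
have : A != set0 by apply: contraNneq n0C => <-.
case/set0Pn=> a0 a0A.
set AB := A :|: B.
have a0AB : a0 \in AB by rewrite inE a0A.
have memC' Z : (Z \in merge_clusters C A B) = [|| (Z != B) && (Z != A) && (Z \in C) | Z == AB].
  by rewrite /merge_clusters !inE andbA.
have ABn : AB \notin C :\ A :\ B.
  rewrite !inE; apply/negP=> /and3P[_ ne ABC]; move/eqP: ne; apply.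
  by apply: (triC _ _ a0 ABC HAC) => //; rewrite inE a0A.
have cC' : clustering (merge_clusters C A B).
  apply/partP; split.
  - rewrite memC' negb_or; apply/andP; split.
      by apply/negP=> /andP[_ h]; rewrite h in n0C.
    by apply/negP=> /eqP e; move: a0AB; rewrite -e inE.
  - move=> x; case: (covC x)=> Z ZC xZ.
    case: (eqVneq Z A)=> [eA|nA].
      by exists AB; rewrite ?memC' ?eqxx ?orbT // inE -eA xZ.
    case: (eqVneq Z B)=> [eB|nB].
      by exists AB; rewrite ?memC' ?eqxx ?orbT // inE -eB xZ orbT.
    by exists Z; rewrite // memC' nA nB ZC.
  - move=> Z1 Z2 x; rewrite !memC'.
    have rest Z : (Z != B) && (Z != A) && (Z \in C) -> x \in Z -> x \in AB -> False.
      case/andP=> /andP[/eqP nB /eqP nA] ZC xZ; rewrite inE => /orP[xA|xB].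
        by apply: nA; apply: triC ZC HAC xZ xA.
      by apply: nB; apply: triC ZC HBC xZ xB.
    case/orP=> [h1|/eqP->]; case/orP=> [h2|/eqP->] x1 x2.
    + by case/andP: h1=> _ C1; case/andP: h2=> _ C2; apply: triC C1 C2 x1 x2.
    + by case: (rest _ h1 x1 x2).
    + by case: (rest _ h2 x2 x1).
    + by [].
split=> //.
have e' : merge_clusters C A B = AB |: (C :\ A :\ B).
  by rewrite /merge_clusters setUC.
have h1 := delta_f cC cD; have h2 := delta_f cC' cD.
rewrite e' in h2; rewrite e' in h2 *.
have BA : B \in C :\ A by rewrite !inE eq_sym nAB HBC.
rewrite (big_setD1 A HAC) (big_setD1 B BA) /= in h1.
rewrite (cardsD1 A C) HAC (cardsD1 B (C :\ A)) BA in h1.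
change (nat_of_bool true) with 1 in h1.
rewrite big_setU1 //= cardsU1 ABn /= in h2.
have hA := f_le1 cD CjD sA; have hB := f_le1 cD CjD sB.
have hAB : 0 < f D AB.
  by apply: fpos => //; apply/set0Pn; exists a0; rewrite inE a0A.
move: h1 h2 hA hB hAB.
move: (delta C D) (delta (AB |: (C :\ A :\ B)) D) #|C :\ A :\ B| #|D| (f D A) (f D B) (f D AB) (\sum_(i in C :\ A :\ B) f D i) => a b c d e g h k.
exact: arith_merge.
Qed.
End Steps2.

Lemma arith_fin a b c d : a <= b + 1 -> d < c -> b <= d -> a <= c.
Proof. lia. Qed.

Theorem theorem8 (T : finType) (Cstar : {set {set T}})
  (gamma : {set {set T}} -> nat) :
  clustering Cstar -> natural_error Cstar gamma ->
  forall C : {set {set T}}, clustering C -> delta C Cstar <= gamma C.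
Proof.
move=> cD nat C cC.
have [n] := ubnP (gamma C); elim: n C cC => // n IH C cC lt.
have [n0C covC triC] := (partP C).1 cC; have [n0D covD triD] := (partP Cstar).1 cD.
have [hs hm] := nat C cC.
case: (boolP [exists Ci in C, exists Cj in Cstar, exists Ck in Cstar,
   (Ck != Cj) && (Ci :&: Cj != set0) && (Ci :&: Ck != set0)]).
  case/existsP=> Ci /andP[CiC /existsP[Cj /andP[CjD /existsP[Ck /andP[CkD /andP[/andP[nkj ij] ik]]]]]].
  have [cC' hd] := split_ok cC cD CiC CjD CkD nkj ij ik.
  have hg : gamma (split_cluster C Ci Cj) < gamma C.
    by apply: hs => //; exists Ck => //; rewrite nkj ik.
  have := IH _ cC' (leq_trans hg (ltnSE lt)).
  move: hd hg; move: (delta C Cstar) (delta (split_cluster C Ci Cj) Cstar) (gamma C) (gamma (split_cluster C Ci Cj)).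
  move=> a b c d; exact: arith_fin.
move=> nS.
have nS' Ci Cj Ck : Ci \in C -> Cj \in Cstar -> Ck \in Cstar -> Ck != Cj ->
    Ci :&: Cj != set0 -> Ci :&: Ck != set0 -> False.
  move=> CiC CjD CkD nkj ij ik; case/negP: nS; apply/existsP; exists Ci; rewrite CiC /=.
  apply/existsP; exists Cj; rewrite CjD /=; apply/existsP; exists Ck.
  by rewrite CkD nkj ij ik.
have sub A Cj : A \in C -> Cj \in Cstar -> A :&: Cj != set0 -> A \subset Cj.
  move=> AC' CjD ne; apply/subsetP=> x xA; case: (covD x)=> K KD xK.
  case: (eqVneq K Cj)=> [<-//|nK]; case: (nS' A Cj K AC' CjD KD nK ne).
  by apply/set0Pn; exists x; rewrite inE xA xK.
case: (boolP [exists Cj in Cstar, exists A in C, exists B in C,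
   (A != B) && (A :&: Cj != set0) && (B :&: Cj != set0)]).
  case/existsP=> Cj /andP[CjD /existsP[A /andP[AC' /existsP[B /andP[BC' /andP[/andP[nAB aj] bj]]]]]].
  have sA := sub A Cj AC' CjD aj; have sB := sub B Cj BC' CjD bj.
  have [cC' hd] := merge_ok cC cD AC' BC' nAB CjD sA sB.
  have hg : gamma (merge_clusters C A B) < gamma C.
    by apply: hm => //; exists Cj => //; rewrite sA sB.
  have := IH _ cC' (leq_trans hg (ltnSE lt)).
  move: hd hg; move: (delta C Cstar) (delta (merge_clusters C A B) Cstar) (gamma C) (gamma (merge_clusters C A B)).
  move=> a b c d; exact: arith_fin.
move=> nM.
suff -> : delta C Cstar = 0 by [].
rewrite /delta /cdist !big1 // => [A AC'|B BD].
  apply/eqP; rewrite subn_eq0 leqNgt; apply/negP=> /card_gt1P[K1 [K2 [K1in K2in ne]]].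
  move: K1in K2in; rewrite !inE => /andP[K1D a1] /andP[K2D a2].
  by apply: (nS' A K2 K1 AC' K2D K1D ne); rewrite setIC.
apply/eqP; rewrite subn_eq0 leqNgt; apply/negP=> /card_gt1P[A1 [A2 [A1in A2in ne]]].
move: A1in A2in; rewrite !inE => /andP[A1C a1] /andP[A2C a2].
case/negP: nM; apply/existsP; exists B; rewrite BD /=.
apply/existsP; exists A1; rewrite A1C /=; apply/existsP; exists A2.
by rewrite A2C ne a1 a2.
Qed.
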